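(* Let $\mathcal{F}=(X,\leq,R)$ be a GC-frame. Then $(\mathcal{T}_\leq,\cup,\cap,{}^\blacktriangle,{}^\blacktriangledown,\emptyset,X)$ is a BDLGC-algebra; in particular, $A^\blacktriangle\in\mathcal{T}_\leq$ and $A^\blacktriangledown\in\mathcal{T}_\leq$ for every $A\in\mathcal{T}_\leq$.
   Context: A GC-frame $(X,\leq,R)$ is a set $X$ with a quasiorder (reflexive, transitive relation) $\leq$ and a relation $R\subseteq X\times X$ such that $x\leq x'$, $x\,R\,y$ and $y'\leq y$ imply $x'\,R\,y'$. $\mathcal{T}_\leq$ is the set of all $B\subseteq X$ with: $x\in B$ and $x\leq y$ imply $y\in B$. For $A\subseteq X$: $A^\blacktriangle=\{x\in X\mid x\,R\,y\text{ for some }y\in A\}$ and $A^\blacktriangledown=\{x\in X\mid\text{for all }y,\ y\,R\,x\text{ implies }y\in A\}$. A BDLGC-algebra $(L,\vee,\wedge,f,g,0,1)$ is a bounded distributive lattice with maps $f,g\colon L\to L$ such that $f(a)\leq b\iff a\leq g(b)$ for all $a,b\in L$. *)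

(* Defs.v *)
Set Implicit Arguments.

Section GC.
Context {X : Type}.

Definition quasiorder (le : X -> X -> Prop) : Prop :=
  (forall x, le x x) /\ (forall x y z, le x y -> le y z -> le x z).

Definition GC_frame (le R : X -> X -> Prop) : Prop :=
  quasiorder le /\
  (forall x x' y y', le x x' -> R x y -> le y' y -> R x' y').

(* membership in T_<= : up-closed subsets *)
Definition upset (le : X -> X -> Prop) (B : X -> Prop) : Prop :=
  forall x y, B x -> le x y -> B y.

Definition set_union (A B : X -> Prop) : X -> Prop := fun x => A x \/ B x.
Definition set_inter (A B : X -> Prop) : X -> Prop := fun x => A x /\ B x.
Definition set_empty : X -> Prop := fun _ => False.
Definition set_full : X -> Prop := fun _ => True.

Definition up_tri (R : X -> X -> Prop) (A : X -> Prop) : X -> Prop :=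
  fun x => exists y, A y /\ R x y.
Definition down_tri (R : X -> X -> Prop) (A : X -> Prop) : X -> Prop :=
  fun x => forall y, R y x -> A y.
End GC.

(* A BDLGC-algebra whose carrier is the subset L of a type T:
   L is closed under the operations, (L, join, meet, zero, one) is a
   bounded distributive lattice, and f(a) <= b <-> a <= g(b) on L,
   where a <= b is the lattice order  meet a b = a. *)
Record BDLGC_algebra {T : Type} (L : T -> Prop) (join meet : T -> T -> T)
    (f g : T -> T) (zero one : T) : Prop := {
  cl_join : forall a b, L a -> L b -> L (join a b);
  cl_meet : forall a b, L a -> L b -> L (meet a b);
  cl_f : forall a, L a -> L (f a);
  cl_g : forall a, L a -> L (g a);
  cl_zero : L zero;
  cl_one : L one;
  join_assoc : forall a b c, L a -> L b -> L c ->
    join a (join b c) = join (join a b) c;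
  meet_assoc : forall a b c, L a -> L b -> L c ->
    meet a (meet b c) = meet (meet a b) c;
  join_comm : forall a b, L a -> L b -> join a b = join b a;
  meet_comm : forall a b, L a -> L b -> meet a b = meet b a;
  join_absorb : forall a b, L a -> L b -> join a (meet a b) = a;
  meet_absorb : forall a b, L a -> L b -> meet a (join a b) = a;
  meet_distr : forall a b c, L a -> L b -> L c ->
    meet a (join b c) = join (meet a b) (meet a c);
  zero_bot : forall a, L a -> join zero a = a;
  one_top : forall a, L a -> meet one a = a;
  galois : forall a b, L a -> L b ->
    (meet (f a) b = f a <-> meet a (g b) = a)
}.

(* Main.v *)
Require Import Defs.
From Stdlib Require Import FunctionalExtensionality PropExtensionality.

Lemma pext {X : Type} (P Q : X -> Prop) : (forall x, P x <-> Q x) -> P = Q.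
Proof. intro H; apply functional_extensionality; intro x; apply propositional_extensionality; auto. Qed.

Lemma inter_eq {X : Type} (A B : X -> Prop) :
  set_inter A B = A <-> (forall x, A x -> B x).
Proof.
  split.
  - intros H x Ha. rewrite <- H in Ha. destruct Ha; auto.
  - intro H. apply pext. intro x. unfold set_inter. firstorder.
Qed.

Theorem lemma3p6 (X : Type) (le R : X -> X -> Prop) :
  GC_frame le R ->
  BDLGC_algebra (upset le) (@set_union X) (@set_inter X)
    (up_tri R) (down_tri R) (@set_empty X) (@set_full X) /\
  (forall A : X -> Prop, upset le A ->
     upset le (up_tri R A) /\ upset le (down_tri R A)).
Proof.
  intros [[Hrefl Htrans] Hmono].
  assert (Hup : forall A : X -> Prop, upset le A -> upset le (up_tri R A)).
  { intros A HA x x' [y [Ay Rxy]] Hle. exists y. split; auto. eapply Hmono; eauto. }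
  assert (Hdown : forall A : X -> Prop, upset le A -> upset le (down_tri R A)).
  { intros A HA x x' Hx Hle y Ryx'. apply Hx. eapply Hmono; eauto. }
  split; [|auto].
  constructor; [ .. | intros a b _ _; rewrite !inter_eq; unfold up_tri, down_tri; firstorder];
    intros; try solve [auto]; unfold upset, set_union, set_inter, set_empty, set_full in *;
    try (apply pext; intros; unfold set_union, set_inter, set_empty, set_full);
    try solve [firstorder].
Qed.
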